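(* Let $\rho \geq 1$ and let $f : \mathbb{N} \to \mathbb{Q}_{\geq 1}$. If there is a polynomial-time $f(|U|)$-approximation algorithm for $(S^{-},\rho)$-SetCover, then there is a polynomial-time $f(|U|)$-approximation algorithm for (unweighted) SetCover.
   Context: SetCover: given a finite universe $U$ and a collection $\mathcal{S} \subseteq \mathcal{P}(U)$ with $\bigcup \mathcal{S} = U$, find a subcollection covering $U$ with as few sets as possible. Reoptimization problem $(\mathcal{M},\rho)$-$\mathcal{I}$: instances are triples $(I,S,I')$ where $(I,I')\in\mathcal{M}$ (an allowed modification), $S$ is a feasible solution of $I$ with value at most $\rho\,\mathrm{OPT}(I)$, and the goal is to compute a solution of $I'$; an $\alpha$-approximation outputs a solution of value at most $\alpha\,\mathrm{OPT}(I')$. Modification $S^{-}$ (removing a set): given $(U,\mathcal{S})$ and $s'\in\mathcal{S}$, the modified instance is $(U,\mathcal{S}\setminus\{s'\})$. Both the original and the modified instance must be feasible ($\bigcup\mathcal{S}=U$). *)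

(* Defs.v *)
From mathcomp Require Import all_boot all_order all_algebra.
Set Implicit Arguments. Unset Strict Implicit. Unset Printing Implicit Defensive.
Import Order.TTheory GRing.Theory Num.Theory.

(* An instance is a duplicate-free list L of subsets of 'I_n (the      *)
(* collection S), listed in some order; a solution is a set of indices *)
(* into L (a subcollection).                                           *)

Definition sc_valid n (L : seq {set 'I_n}) : bool :=
  uniq L && (\bigcup_(A <- L) A == [set: 'I_n]).

Definition sc_covers n (L : seq {set 'I_n}) (J : {set 'I_(size L)}) : bool :=
  \bigcup_(i in J) nth set0 L i == [set: 'I_n].
Arguments sc_covers {n} L J.

(* OPT(I): minimum number of sets in a cover (default size L when no
   cover exists, which never happens for valid instances). *)
Definition sc_opt n (L : seq {set 'I_n}) : nat :=
  \big[minn/size L]_(J : {set 'I_(size L)} | sc_covers L J) #|J|.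

Inductive Sym := Blank | Zero | One | Hash | Dollar.
Inductive Move := MLeft | MRight | MStay.

Record TM := {
  tm_k : nat;
  tm_start : 'I_tm_k.+1;
  (* None = halt *)
  tm_delta : 'I_tm_k.+1 -> Sym -> option ('I_tm_k.+1 * Sym * Move)
}.

(* configuration: state, left part of the tape (nearest cell first),
   right part of the tape starting with the scanned cell;
   cells beyond the lists are blank. *)
Definition config (M : TM) := ('I_(tm_k M).+1 * seq Sym * seq Sym)%type.

Definition tm_step (M : TM) (c : config M) : option (config M) :=
  let: (q, l, r) := c in
  match tm_delta q (head Blank r) with
  | None => None
  | Some (q', s, MStay) => Some (q', l, s :: behead r)
  | Some (q', s, MRight) => Some (q', s :: l, behead r)
  | Some (q', s, MLeft) => Some (q', behead l, head Blank l :: s :: behead r)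
  end.

Definition is_blank (s : Sym) : bool := if s is Blank then true else false.

Definition tm_output (M : TM) (c : config M) : seq Sym :=
  let: (_, _, r) := c in take (find is_blank r) r.

Fixpoint tm_run_cfg (M : TM) (t : nat) (c : config M) : option (seq Sym) :=
  match tm_step c with
  | None => Some (tm_output c)
  | Some c' => if t is t'.+1 then tm_run_cfg t' c' else None
  end.

Definition tm_run (M : TM) (t : nat) (w : seq Sym) : option (seq Sym) :=
  tm_run_cfg t (tm_start M, [::], w).

Definition enc_bit (b : bool) : Sym := if b then One else Zero.

Definition enc_set n (A : {set 'I_n}) : seq Sym :=
  [seq enc_bit (i \in A) | i <- enum 'I_n].

Definition enc_inst n (L : seq {set 'I_n}) : seq Sym :=
  nseq n One ++ Hash :: flatten [seq enc_set A ++ [:: Hash] | A <- L].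

Definition enc_sol m (J : {set 'I_m}) : seq Sym :=
  [seq enc_bit (i \in J) | i <- enum 'I_m].

Definition enc_reopt n (L : seq {set 'I_n}) (J : {set 'I_(size L)})
  (L' : seq {set 'I_n}) : seq Sym :=
  enc_inst L ++ Dollar :: enc_sol J ++ Dollar :: enc_inst L'.
Arguments enc_reopt {n} L J L'.

Definition sc_good_output (f : nat -> rat) n (L : seq {set 'I_n})
  (o : seq Sym) : Prop :=
  exists J : {set 'I_(size L)},
    [/\ sc_covers L J, o = enc_sol J & (#|J|%:R <= f n * (sc_opt L)%:R)%R].

Definition poly_approx_SetCover (f : nat -> rat) : Prop :=
  exists (M : TM) (c d : nat),
    forall n (L : seq {set 'I_n}), sc_valid L ->
      let w := enc_inst L in
      exists o, tm_run M (c * size w ^ d + c) w = Some o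
                /\ sc_good_output f L o.

Definition poly_approx_reopt_Sminus (R : realFieldType) (rho : R)
  (f : nat -> rat) : Prop :=
  exists (M : TM) (c d : nat),
    forall n (L L' : seq {set 'I_n}) (s' : {set 'I_n})
           (J : {set 'I_(size L)}),
      sc_valid L -> s' \in L -> perm_eq L' (rem s' L) -> sc_valid L' ->
      sc_covers L J -> (#|J|%:R <= rho * (sc_opt L)%:R)%R ->
      let w := enc_reopt L J L' in
      exists o, tm_run M (c * size w ^ d + c) w = Some o
                /\ sc_good_output f L' o.

(* Main.v *)
Require Import Defs.
From mathcomp Require Import all_boot all_order all_algebra.
Import Order.TTheory GRing.Theory Num.Theory.
Set Warnings "-notation-overridden -ambiguous-paths -redundant-canonical-projection".
From HB Require Import structures.
From mathcomp Require Import zify.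
Set Implicit Arguments. Unset Strict Implicit. Unset Printing Implicit Defensive.


Definition sym2o (s : Sym) : 'I_5 := match s with Blank => @Ordinal 5 0 isT | Zero => @Ordinal 5 1 isT | One => @Ordinal 5 2 isT | Hash => @Ordinal 5 3 isT | Dollar => @Ordinal 5 4 isT end.
Definition o2sym (i : 'I_5) : Sym := match val i with 0 => Blank | 1 => Zero | 2 => One | 3 => Hash | _ => Dollar end.
Lemma sym2oK : cancel sym2o o2sym. Proof. by case. Qed.
HB.instance Definition _ := Finite.copy Sym (can_type sym2oK).

Section Gen.
Variable S : Type.
Definition cfg := (S * seq Sym * seq Sym)%type.
Definition Delta := S -> Sym -> option (S * Sym * Move).
Variable d : Delta.

Definition step (c : cfg) : option cfg :=
  let: (q, l, r) := c in
  match d q (head Blank r) with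
  | None => None
  | Some (q', s, MStay) => Some (q', l, s :: behead r)
  | Some (q', s, MRight) => Some (q', s :: l, behead r)
  | Some (q', s, MLeft) => Some (q', behead l, head Blank l :: s :: behead r)
  end.

Definition outp (c : cfg) : seq Sym := let: (_, _, r) := c in take (find is_blank r) r.

Fixpoint run (t : nat) (c : cfg) : option (seq Sym) :=
  match step c with
  | None => Some (outp c)
  | Some c' => if t is t'.+1 then run t' c' else None
  end.

Fixpoint nsteps (n : nat) (c : cfg) : option cfg :=
  if n is n'.+1 then (if step c is Some c' then nsteps n' c' else None) else Some c.

Lemma runE t c : run t c = match step c with None => Some (outp c)
  | Some c' => if t is t'.+1 then run t' c' else None end.
Proof. by case: t. Qed.

Lemma nstepsS n c : nsteps n.+1 c = obind (nsteps n) (step c).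
Proof. by rewrite /=; case: (step c). Qed.

Lemma nsteps_add a b c c1 c2 : nsteps a c = Some c1 -> nsteps b c1 = Some c2 ->
  nsteps (a + b) c = Some c2.
Proof.
elim: a c => [|a IH] c /=; first by case=> ->.
by case: (step c) => // c' /IH; apply.
Qed.

Definition leadsto c N c' := forall t, run (N + t) c = run t c'.

Lemma leadsto_trans c1 c2 c3 a b : leadsto c1 a c2 -> leadsto c2 b c3 -> leadsto c1 (a + b) c3.
Proof. by move=> h1 h2 t; rewrite -addnA h1 h2. Qed.

Lemma nsteps_leadsto n c c' : nsteps n c = Some c' -> leadsto c n c'.
Proof.
elim: n c => [|n IH] c /=; first by case=> -> t.
case E: (step c) => [c1|] // /IH h t /=.
by rewrite E h.
Qed.

Lemma stepeq_leadsto c c' : step c = step c' -> outp c = outp c' -> leadsto c 0 c'.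
Proof. by move=> h1 h2 t /=; case: t => [|t] /=; rewrite h1 h2. Qed.

Lemma run_halt c t : step c = None -> run t c = Some (outp c).
Proof. by case: t => [|t] /= ->. Qed.

Lemma run_mono t t' c o : run t c = Some o -> run (t + t') c = Some o.
Proof.
elim: t c => [|t IH] c.
- rewrite /=; case E: (step c) => [c1|] // [<-]. by rewrite add0n run_halt.
- rewrite addSn /=; case E: (step c) => [c1|] //; exact: IH.
Qed.

End Gen.

Arguments step {S}. Arguments run {S}. Arguments nsteps {S}. Arguments leadsto {S}.
Arguments outp {S}.

Lemma tm_run_cfgE (M : TM) t c : tm_run_cfg t c = run (@tm_delta M) t c.
Proof.
elim: t c => [|t IH] [[q l] r] /=; rewrite /tm_step /step /=;
  case: (tm_delta q _) => [[[q' s] []]|] //=.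
Qed.

Section Sim.
Variables (S S' : Type) (d : Delta S) (d' : Delta S') (h : S -> S').
Definition liftp (p : S * Sym * Move) : S' * Sym * Move := (h p.1.1, p.1.2, p.2).
Definition maph (c : cfg S) : cfg S' := (h c.1.1, c.1.2, c.2).
Definition simP := forall s a p, d s a = Some p -> d' (h s) a = Some (liftp p).
Definition simF := forall s a, d' (h s) a = omap liftp (d s a).

Lemma simFP : simF -> simP.
Proof. by move=> H s a p E; rewrite H E. Qed.

Lemma step_simP : simP -> forall c c', step d c = Some c' -> step d' (maph c) = Some (maph c').
Proof.
move=> H [[q l] r] c' /=.
case E: (d q _) => [[[q1 s] m]|] //; rewrite (H _ _ _ E) /=.
by case: m E => _ [<-].
Qed.

Lemma nsteps_sim : simP -> forall n c c', nsteps d n c = Some c' -> nsteps d' n (maph c) = Some (maph c').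
Proof.
move=> H; elim=> [|n IH] c c'; first by case=> ->.
rewrite [nsteps d _ _]/=.
case E: (step d c) => [c1|] // /IH.
have E2 := step_simP H E.
by move=> h1; rewrite nstepsS E2.
Qed.

Lemma step_simF : simF -> forall c, step d' (maph c) = omap maph (step d c).
Proof.
move=> H [[q l] r] /=; rewrite H.
by case: (d q _) => [[[q1 s] m]|] //=; case: m.
Qed.

Lemma run_sim : simF -> forall t c, run d' t (maph c) = run d t c.
Proof.
move=> H; elim=> [|t IH] c; rewrite runE [run d _ c]runE (step_simF H);
  case: (step d c) => [c1|] //=; by case: c => [[]].
Qed.
End Sim.

Lemma simP_comp (S1 S2 S3 : Type) (d1 : Delta S1) (d2 : Delta S2) (d3 : Delta S3) h1 h2 :
  simP d1 d2 h1 -> simP d2 d3 h2 -> simP d1 d3 (h2 \o h1).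
Proof. by move=> H1 H2 s a p /H1 /H2. Qed.

Lemma simF_comp (S1 S2 S3 : Type) (d1 : Delta S1) (d2 : Delta S2) (d3 : Delta S3) h1 h2 :
  simF d1 d2 h1 -> simF d2 d3 h2 -> simF d1 d3 (h2 \o h1).
Proof. move=> H1 H2 s a /=; rewrite H2 H1; by case: (d1 s a). Qed.

Section Comb.
Variables (S1 S2 : Type) (d1 : Delta S1) (d2 : Delta S2) (k : S1 -> S2).
Definition seqk : Delta (S1 + S2) := fun q a =>
  match q with
  | inl s => match d1 s a with
             | Some p => Some (liftp inl p)
             | None => omap (liftp inr) (d2 (k s) a) end
  | inr s => omap (liftp inr) (d2 s a)
  end.
Definition sumd : Delta (S1 + S2) := fun q a =>
  match q with
  | inl s => omap (liftp inl) (d1 s a)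
  | inr s => omap (liftp inr) (d2 s a)
  end.
Lemma seqk_l : simP d1 seqk inl. Proof. by move=> s a p /= ->. Qed.
Lemma seqk_r : simF d2 seqk inr. Proof. by []. Qed.
Lemma sumd_l : simF d1 sumd inl. Proof. by []. Qed.
Lemma sumd_r : simF d2 sumd inr. Proof. by []. Qed.
Lemma seqk_trans s l r : d1 s (head Blank r) = None ->
  step seqk (inl s, l, r) = step seqk (inr (k s), l, r).
Proof. by rewrite /step /= => ->. Qed.
End Comb.

Lemma trans_lift (S S' : Type) (d : Delta S) (d' : Delta S') h c1 c2 :
  simF d d' h -> step d c1 = step d c2 -> c1.2 = c2.2 ->
  leadsto d' (maph h c1) 0 (maph h c2).
Proof.
move=> H E E2; apply: stepeq_leadsto; first by rewrite !(step_simF H) E.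
by move: c1 c2 E2 {E} => [[? ?] ?] [[? ?] ?] /= ->.
Qed.

Definition sc (a : Sym) (t : seq Sym) := if is_blank a && nilp t then [::] else a :: t.
Fixpoint strip (s : seq Sym) : seq Sym := if s is a :: s' then sc a (strip s') else [::].

Lemma head_strip s : head Blank (strip s) = head Blank s.
Proof. by case: s => [|a s] //=; rewrite /sc; case: a => //=; case: (nilp _). Qed.

Lemma strip_behead s : strip (behead s) = behead (strip s).
Proof. case: s => [|a s] //=; rewrite /sc; case: ifP => //= /andP [_ /nilP ->]. by []. Qed.

Definition allb (s : seq Sym) := all is_blank s.

Lemma strip_allb s b : allb b -> strip (s ++ b) = strip s.
Proof.
move=> hb; elim: s => [|a s IH] /=; last by rewrite IH.
by elim: b hb => [|x b IH] //= /andP [hx /IH ->]; rewrite /sc hx.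
Qed.

Lemma outp_strip r : take (find is_blank r) r = take (find is_blank (strip r)) (strip r).
Proof.
elim: r => [|a r IH] //=; rewrite /sc.
case: a => //=; first by case: (nilp _).
all: by rewrite IH.
Qed.

Definition ceq (S : Type) (c c' : cfg S) := [/\ c.1.1 = c'.1.1, strip c.1.2 = strip c'.1.2 & strip c.2 = strip c'.2].

Lemma step_ceq (S : Type) (d : Delta S) (c c' : cfg S) : ceq c c' ->
  match step d c, step d c' with Some x, Some y => ceq x y | None, None => True | _, _ => False end.
Proof.
case: c c' => [[q l] r] [[q' l'] r'] [/= <- hl hr].
rewrite /step -(head_strip r) hr head_strip.
case: (d q _) => [[[q1 s] []]|] //; split => //=.
all: try (by rewrite hl). all: try (by rewrite !strip_behead hl).
all: try (by rewrite !strip_behead hr).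
rewrite -(head_strip l) hl head_strip.
by rewrite strip_behead hr -strip_behead.
Qed.

Lemma run_ceq (S : Type) (d : Delta S) t (c c' : cfg S) : ceq c c' -> run d t c = run d t c'.
Proof.
have ho : forall c c' : cfg S, ceq c c' -> outp c = outp c'.
  by move=> [[q l] r] [[q' l'] r'] [_ _ hr] /=; rewrite outp_strip hr -outp_strip.
elim: t c c' => [|t IH] c c' h; rewrite runE [run d _ c']runE;
have := step_ceq d h; case: (step d c) => [x|]; case: (step d c') => [y|] //.
- by rewrite (ho _ _ h).
- by move=> /IH ->.
- by rewrite (ho _ _ h).
Qed.

Lemma run_blanks (S : Type) (d : Delta S) t q l r b : allb l -> allb b ->
  run d t (q, l, r ++ b) = run d t (q, [::], r).
Proof.
move=> hl hb; apply: run_ceq; split => //=; first by rewrite -[l]cat0s strip_allb.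
by rewrite strip_allb.
Qed.

Section MK.
Variables (S : finType) (s0 : S) (d : Delta S).
Lemma cardS_gt0 : 0 < #|S|. Proof. by apply/card_gt0P; exists s0. Qed.
Definition kS := #|S|.-1.
Lemma cardSE : #|S| = kS.+1. Proof. by rewrite prednK // cardS_gt0. Qed.
Definition eS (s : S) : 'I_kS.+1 := cast_ord cardSE (enum_rank s).
Definition eS' (i : 'I_kS.+1) : S := enum_val (cast_ord (esym cardSE) i).
Lemma eSK : cancel eS eS'. Proof. by move=> s; rewrite /eS /eS' cast_ordK enum_rankK. Qed.
Definition mkTM : TM := {| tm_k := kS; tm_start := eS s0;
  tm_delta := fun i a => omap (liftp eS) (d (eS' i) a) |}.
Lemma mkTM_run t w : tm_run mkTM t w = run d t (s0, [::], w).
Proof.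
rewrite /tm_run tm_run_cfgE.
have -> : (tm_start mkTM, [::], w) = maph eS (s0, [::], w) by [].
apply: run_sim => s a /=; by rewrite eSK.
Qed.
End MK.

Lemma head_allb l : allb l -> head Blank l = Blank.
Proof. by case: l => [|[] l]. Qed.
Lemma behead_allb l : allb l -> allb (behead l).
Proof. by case: l => [|a l] //= /andP []. Qed.

Definition nonblank s := ~~ is_blank s.

Lemma sweep_left (S : Type) (d : Delta S) q :
  (forall s, nonblank s -> d q s = Some (q, s, MLeft)) ->
  forall U l R, all nonblank U ->
  nsteps d (size U) (q, behead (U ++ l), head Blank (U ++ l) :: R) =
  Some (q, behead l, head Blank l :: rev U ++ R).
Proof.
move=> H; elim=> [|a U IH] l R //= /andP [ha hU].
rewrite /step /= H //= IH // rev_cons cat_rcons //.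
Qed.

Lemma sweep_right (S : Type) (d : Delta S) q (P : pred Sym) :
  (forall s, P s -> d q s = Some (q, s, MRight)) ->
  forall U L R, all P U ->
  nsteps d (size U) (q, L, U ++ R) = Some (q, rev U ++ L, R).
Proof.
move=> H; elim=> [|a U IH] L R //= /andP [ha hU].
rewrite /step /= H //= IH // rev_cons cat_rcons //.
Qed.

Definition isstop s := match s with Blank | Dollar => true | _ => false end.
Definition nonstop s := ~~ isstop s.

Section Pass.
Variables (Mode : finType) (dir : bool) (g : Mode -> Sym -> Mode * option Sym * bool).
Definition PS : finType := ((Mode + (Mode * Sym * Sym * bool)) + (Mode * Sym * bool))%type.
Definition mvd := if dir then MRight else MLeft.
Definition pdelta : Delta PS := fun q s => match q with
 | inl (inl m) => if isstop s then None else
   match g m s with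
   | (m', None, _) => Some (inl (inl m'), s, mvd)
   | (m', Some y, c) => Some (inl (inr (m', y, s, c)), Blank, MLeft) end
 | inl (inr (m', y, x, c)) => if is_blank s then Some (inr (m', x, c), y, MRight) else Some (q, s, MLeft)
 | inr (m', x, c) => if is_blank s then Some (inl (inl m'), x, if c then mvd else MStay) else Some (q, s, MRight)
 end.

Definition Rd (m : Mode) : PS := inl (inl m).

Inductive psem : Mode -> seq Sym -> Mode -> seq Sym -> Prop :=
 | ps_nil m : psem m [::] m [::]
 | ps_skip m x m1 c X m' E : g m x = (m1, None, c) -> psem m1 X m' E -> psem m (x :: X) m' E
 | ps_emit m x m1 y X m' E : g m x = (m1, Some y, true) -> psem m1 X m' E -> psem m (x :: X) m' (y :: E)
 | ps_nc m x m1 y X m' E : g m x = (m1, Some y, false) -> psem m1 (x :: X) m' E -> psem m (x :: X) m' (y :: E).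

Lemma psem_cat m X1 m1 E1 X2 m2 E2 : psem m X1 m1 E1 -> psem m1 X2 m2 E2 ->
  psem m (X1 ++ X2) m2 (E1 ++ E2).
Proof.
move=> h1 h2; elim: h1 h2 => //= {m X1 m1 E1}.
- by move=> m x m1 c X m' E hg _ IH /IH; apply: ps_skip hg.
- by move=> m x m1 y X m' E hg _ IH /IH; apply: ps_emit hg.
- by move=> m x m1 y X m' E hg _ IH /IH; apply: ps_nc hg.
Qed.

Hypothesis Hg : forall m x m1 y c, g m x = (m1, Some y, c) -> nonblank y.

Lemma pcore m1 y x c U l R : nonblank y -> all nonblank U -> allb l ->
  nsteps pdelta (size U + 1 + size U)
    (inl (inr (m1, y, x, c)), behead (U ++ l), head Blank (U ++ l) :: Blank :: R) =
  Some (inr (m1, x, c), U ++ y :: behead l, Blank :: R).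
Proof.
move=> hy hU hl.
rewrite -addnA; apply: nsteps_add; first by apply: sweep_left => // s /negbTE /= ->.
rewrite head_allb //.
apply: (@nsteps_add _ _ 1); first by rewrite /= /step /=.
have := @sweep_right _ pdelta (inr (m1, x, c)) nonblank _ (rev U) (y :: behead l) (Blank :: R).
rewrite revK size_rev; apply; last by rewrite all_rev.
by move=> s /negbTE /= ->.
Qed.


Lemma pass_lr m X m' E Lft l rb : dir = true -> psem m X m' E ->
  all nonblank Lft -> allb l -> all nonstop X ->
  exists k l', [/\ allb l', k <= (size X + size E) * (2 * (size Lft + size X + size E) + 3) &
    nsteps pdelta k (Rd m, Lft ++ l, X ++ rb) = Some (Rd m', rev X ++ Lft ++ E ++ l', rb)].
Proof.
move=> hd h; elim: h Lft l => {m X m' E}.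
- by move=> m Lft l _ hl _; exists 0, l.
- move=> m x m1 c X m' E hg _ IH Lft l hL hl /= /andP [hx hX].
  have [|k [l' [hl' hk hs]]] := IH (x :: Lft) l _ hl hX.
    by rewrite /= hL andbT; case: x hx {hg}.
  exists (1 + k), l'; split => //.
    by move: hk => /=; nia.
  apply: nsteps_add; last by move: hs; rewrite rev_cons cat_rcons; apply.
  by rewrite /= /step /= (negbTE hx) hg /mvd hd.
- move=> m x m1 y X m' E hg _ IH Lft l hL hl /= /andP [hx hX].
  have hy := Hg hg.
  have [|k [l' [hl' hk hs]]] := IH (x :: (Lft ++ [:: y])) (behead l) _ (behead_allb hl) hX.
    by rewrite /= all_cat hL /= hy andbT; case: x hx {hg}.
  exists ((1 + (size Lft + 1 + size Lft)) + 1 + k), l'; split => //.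
    move: hk => /=; rewrite size_cat /=; clear; nia.
  apply: nsteps_add; last first.
    by move: hs; rewrite rev_cons cat_rcons /= -!catA /=; apply.
  apply: nsteps_add; first apply: nsteps_add.
  - by rewrite /= /step /= (negbTE hx) hg.
  - by apply: pcore.
  - by rewrite /= /step /= /mvd hd.
- move=> m x m1 y X m' E hg _ IH Lft l hL hl /= /andP [hx hX].
  have hy := Hg hg.
  have hX' : all nonstop (x :: X) by rewrite /= hx.
  have [|k [l' [hl' hk hs]]] := IH (Lft ++ [:: y]) (behead l) _ (behead_allb hl) hX'.
    by rewrite all_cat hL /= hy.
  exists ((1 + (size Lft + 1 + size Lft)) + 1 + k), l'; split => //.
    by move: hk => /=; rewrite size_cat /=; nia.
  apply: nsteps_add; last first.
    by move: hs; rewrite -!catA /=; apply.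
  apply: nsteps_add; first apply: nsteps_add.
  - by rewrite /= /step /= (negbTE hx) hg.
  - by apply: pcore.
  - by rewrite /= /step /=.
Qed.

Lemma pass_rl m X m' E Lft l R : dir = false -> psem m X m' E ->
  all nonblank Lft -> allb l -> all nonstop X ->
  exists k l', [/\ allb l', k <= (size X + size E) * (2 * (size Lft + size X + size E) + 3) &
    nsteps pdelta k (Rd m, behead (X ++ Lft ++ l), head Blank (X ++ Lft ++ l) :: R) =
      Some (Rd m', behead (Lft ++ E ++ l'), head Blank (Lft ++ E ++ l') :: rev X ++ R)].
Proof.
move=> hd h; elim: h Lft l R => {m X m' E}.
- by move=> m Lft l R _ hl _; exists 0, l.
- move=> m x m1 c X m' E hg _ IH Lft l R hL hl /= /andP [hx hX].
  have [k [l' [hl' hk hs]]] := IH Lft l (x :: R) hL hl hX.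
  exists (1 + k), l'; split => //.
    by move: hk => /=; nia.
  apply: nsteps_add; last by move: hs; rewrite rev_cons cat_rcons; apply.
  by rewrite /= /step /= (negbTE hx) hg /mvd hd.
- move=> m x m1 y X m' E hg _ IH Lft l R hL hl /= /andP [hx hX].
  have hy := Hg hg.
  have [|k [l' [hl' hk hs]]] := IH (Lft ++ [:: y]) (behead l) (x :: R) _ (behead_allb hl) hX.
    by rewrite all_cat hL /= hy.
  exists ((1 + (size (X ++ Lft) + 1 + size (X ++ Lft))) + 1 + k), l'; split => //.
    by move: hk => /=; rewrite !size_cat /=; nia.
  apply: nsteps_add; last first.
    by move: hs; rewrite rev_cons cat_rcons -!catA /=; apply.
  apply: nsteps_add; first apply: nsteps_add.
  - by rewrite /= /step /= (negbTE hx) hg.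
  - rewrite catA; apply: pcore => //.
    by rewrite all_cat hL andbT; apply: sub_all hX => s; case: s.
  - by rewrite /= /step /= /mvd hd -!catA.
- move=> m x m1 y X m' E hg _ IH Lft l R hL hl /= /andP [hx hX].
  have hy := Hg hg.
  have hX' : all nonstop (x :: X) by rewrite /= hx.
  have [|k [l' [hl' hk hs]]] := IH (Lft ++ [:: y]) (behead l) R _ (behead_allb hl) hX'.
    by rewrite all_cat hL /= hy.
  exists ((1 + (size (X ++ Lft) + 1 + size (X ++ Lft))) + 1 + k), l'; split => //.
    by move: hk => /=; rewrite !size_cat /=; nia.
  apply: nsteps_add; last first.
    by move: hs; rewrite -!catA /=; apply.
  apply: nsteps_add; first apply: nsteps_add.
  - by rewrite /= /step /= (negbTE hx) hg.
  - rewrite catA; apply: pcore => //.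
    by rewrite all_cat hL andbT; apply: sub_all hX => s; case: s.
  - by rewrite /= /step /= -!catA.
Qed.

End Pass.

Definition is01 s := match s with Zero | One => true | _ => false end.

Lemma enc_set01 n (A : {set 'I_n}) : all is01 (enc_set A).
Proof. by rewrite /enc_set all_map; apply/allP => i _ /=; case: (i \in A). Qed.

Lemma enc_set_zero n (A : {set 'I_n}) : (Zero \in enc_set A) = (A != setT).
Proof.
rewrite /enc_set; apply/mapP/idP.
- move=> [i _]; case hi: (i \in A) => //= _.
  by apply/negP => /eqP hA; rewrite hA in_setT in hi.
- move=> hA; have : ~~ ([set: 'I_n] \subset A).
    by apply: contra hA => h; rewrite eqEsubset subsetT h.
  case/subsetPn => i _ hi; exists i; first by rewrite mem_enum.
  by rewrite (negbTE hi).
Qed.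

Definition blocks n (L : seq {set 'I_n}) := flatten [seq Hash :: enc_set A | A <- L].

Lemma instE n (L : seq {set 'I_n}) : enc_inst L = nseq n One ++ blocks L ++ [:: Hash].
Proof.
rewrite /enc_inst /blocks; congr (_ ++ _).
elim: L => [|A L IH] //=.
by rewrite -!catA /= IH.
Qed.

Lemma rev_instE n (L : seq {set 'I_n}) : rev (enc_inst L) = Hash :: rev (blocks L) ++ nseq n One.
Proof. by rewrite instE !rev_cat rev_nseq -catA. Qed.

Lemma blocks_cons n A (L : seq {set 'I_n}) : blocks (A :: L) = Hash :: enc_set A ++ blocks L.
Proof. by []. Qed.

Lemma inst_nonstop n (L : seq {set 'I_n}) : all nonstop (enc_inst L).
Proof.
rewrite instE !all_cat andbT /=; apply/andP; split.
  by apply/allP => x /nseqP [->].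
rewrite /blocks; elim: L => [|A L IH] //=.
rewrite all_cat IH andbT /=.
by apply: sub_all (enc_set01 A) => -[].
Qed.

Definition Mode0 : finType := (bool + (bool * bool * bool))%type.
Definition g0 (m : Mode0) (s : Sym) : Mode0 * option Sym * bool :=
  match m with
  | inl nz => match s with One => (inl true, None, true)
              | Hash => (inr (nz, true, false), None, true) | _ => (m, None, true) end
  | inr (nz, b, f) => match s with Zero => (inr (nz, false, f), None, true)
              | Hash => (inr (nz, true, f || b), None, true) | _ => (m, None, true) end
  end.

Lemma g0_nb m x m1 y c : g0 m x = (m1, Some y, c) -> nonblank y.
Proof. by case: m => [nz|[[nz b] f]]; case: x. Qed.

Lemma g0_01 nz b f s : all is01 s ->
  psem g0 (inr (nz, b, f)) s (inr (nz, b && (Zero \notin s), f)) [::].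
Proof.
elim: s b => [|x s IH] b /=; first by rewrite andbT; constructor.
case: x => //= h.
- rewrite andbF; apply: ps_skip; first reflexivity.
  by have := IH false h.
- apply: ps_skip; first reflexivity.
  by have := IH b h; rewrite in_cons.
Qed.

Lemma g0_ones nz n : psem g0 (inl nz) (nseq n One) (inl (nz || (0 < n))) [::].
Proof.
elim: n nz => [|n IH] nz /=; first by rewrite orbF; constructor.
apply: ps_skip; first reflexivity.
by have := IH true; rewrite orbT.
Qed.

Definition rows n (L : seq {set 'I_n}) := flatten [seq enc_set A ++ [:: Hash] | A <- L].

Lemma g0_rows n nz f (L : seq {set 'I_n}) :
  psem g0 (inr (nz, true, f)) (rows L) (inr (nz, true, f || (setT \in L))) [::].
Proof.
elim: L f => [|A L IH] f.
  by rewrite /= orbF; constructor.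
rewrite /rows /= -catA -[[::]]/([::] ++ [::]); apply: psem_cat; first by apply: g0_01 (enc_set01 A).
rewrite /= enc_set_zero negbK.
apply: ps_skip; first reflexivity.
have -> : f || (setT \in A :: L) = (f || (A == setT)) || (setT \in L).
  by rewrite in_cons orbA eq_sym.
exact: IH.
Qed.

Lemma g0_all n (L : seq {set 'I_n}) :
  psem g0 (inl false) (enc_inst L) (inr (0 < n, true, setT \in L)) [::].
Proof.
rewrite /enc_inst -[[::]]/([::] ++ [::]); apply: psem_cat; first exact: g0_ones.
apply: ps_skip; first reflexivity.
exact: g0_rows.
Qed.

Definition Mode4 : finType := option (option bool).

Lemma psem_nc' (M : finType) g (m m1 m' : M) y X E : (forall x, g m x = (m1, Some y, false)) ->
  X != [::] -> psem g m1 X m' E -> psem g m X m' (y :: E).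
Proof. by case: X => // x X h _; apply: ps_nc. Qed.

Lemma inst_nil n (L : seq {set 'I_n}) : enc_inst L != [::].
Proof. by rewrite /enc_inst -size_eq0 size_cat /= addnS. Qed.

Definition gA (m : Mode4) (s : Sym) : Mode4 * option Sym * bool :=
  match m with
  | None => (Some None, Some Dollar, false)
  | Some None => (Some (Some false), Some One, false)
  | Some (Some false) => (Some (Some true), None, true)
  | Some (Some true) => if s is Hash then (m, Some Zero, true) else (m, None, true)
  end.
Lemma gA_nb m x m1 y c : gA m x = (m1, Some y, c) -> nonblank y.
Proof. by case: m => [[[]|]|] /=; case: x => // -[_ <-]. Qed.

Lemma gA_01 s : all is01 s -> psem gA (Some (Some true)) s (Some (Some true)) [::].
Proof.
elim: s => [|x s IH] /=; first constructor.
by case: x => //= h; apply: ps_skip (IH h).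
Qed.

Lemma gA_ones n : psem gA (Some (Some true)) (nseq n One) (Some (Some true)) [::].
Proof. by apply: gA_01; apply/allP => x /nseqP [->]. Qed.

Lemma gA_blocks n (L : seq {set 'I_n}) :
  psem gA (Some (Some true)) (rev (blocks L)) (Some (Some true)) (nseq (size L) Zero).
Proof.
elim: L => [|A L IH]; first constructor.
rewrite blocks_cons -cat1s catA rev_cat [size _]/= -addn1 nseqD.
apply: psem_cat IH _.
rewrite rev_cat -[nseq 1 Zero]/([::] ++ [:: Zero]); apply: psem_cat.
  by apply: gA_01; rewrite all_rev enc_set01.
by apply: ps_emit; [reflexivity | constructor].
Qed.

Lemma gA_all n (L : seq {set 'I_n}) :
  psem gA None (rev (enc_inst L)) (Some (Some true)) ([:: Dollar; One] ++ nseq (size L) Zero).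
Proof.
rewrite rev_instE.
apply: ps_nc; first reflexivity.
apply: ps_nc; first reflexivity.
apply: ps_skip; first reflexivity.
rewrite -[nseq (size L) Zero]cats0; apply: psem_cat; first exact: gA_blocks.
exact: gA_ones.
Qed.

Definition gB (m : Mode4) (s : Sym) : Mode4 * option Sym * bool :=
  match m with
  | None => (Some None, Some Dollar, false)
  | Some None => (Some (Some false), Some Hash, false)
  | Some (Some false) => match s with One => (m, Some One, true)
                         | Hash => (Some (Some true), None, true) | _ => (m, None, true) end
  | Some (Some true) => (m, None, true)
  end.
Lemma gB_nb m x m1 y c : gB m x = (m1, Some y, c) -> nonblank y.
Proof. by case: m => [[[]|]|] /=; case: x => // -[_ <-]. Qed.

Lemma gB_rest s : psem gB (Some (Some true)) s (Some (Some true)) [::].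
Proof. by elim: s => [|x s IH]; [constructor | apply: ps_skip IH]. Qed.

Lemma gB_ones n : psem gB (Some (Some false)) (nseq n One) (Some (Some false)) (nseq n One).
Proof. elim: n => [|n IH] /=; first constructor. by apply: ps_emit IH. Qed.

Lemma gB_all n (L : seq {set 'I_n}) :
  psem gB None (enc_inst L) (Some (Some true)) ([:: Dollar; Hash] ++ nseq n One).
Proof.
rewrite /=; apply: psem_nc'; [by [] | exact: inst_nil |].
apply: psem_nc'; [by [] | exact: inst_nil |].
rewrite /enc_inst -[X in psem _ _ _ _ X]cats0; apply: psem_cat.
  exact: gB_ones.
by apply: ps_skip (gB_rest _).
Qed.

Definition gC (m : unit) (s : Sym) : unit * option Sym * bool :=
  (tt, Some (if is_blank s then Zero else s), true).
Lemma gC_nb m x m1 y c : gC m x = (m1, Some y, c) -> nonblank y.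
Proof. by case: x => -[_ <-]. Qed.
Lemma gC_all s : all nonblank s -> psem gC tt s tt s.
Proof.
elim: s => [|x s IH] /=; first constructor.
case/andP => hx hs; apply: ps_emit (IH hs).
by rewrite /gC (negbTE hx).
Qed.

Definition gD (nz : bool) (m : Mode4) (s : Sym) : Mode4 * option Sym * bool :=
  match m with
  | None => (Some None, Some Dollar, false)
  | Some None => (Some (Some true), None, true)
  | Some (Some b) => match s with Zero => (Some (Some false), None, true)
                     | Hash => (Some (Some true), Some (enc_bit (nz && b)), true)
                     | _ => (m, None, true) end
  end.
Lemma gD_nb nz m x m1 y c : gD nz m x = (m1, Some y, c) -> nonblank y.
Proof. by case: m => [[b|]|] /=; case: x => // -[_ <-] //; case: (nz && b). Qed.

Lemma gD_01 nz b s : all is01 s -> psem (gD nz) (Some (Some b)) s (Some (Some (b && (Zero \notin s)))) [::].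
Proof.
elim: s b => [|x s IH] b /=; first by rewrite andbT; constructor.
case: x => //= h.
- rewrite andbF; apply: ps_skip; first reflexivity.
  by have := IH false h.
- apply: ps_skip; first reflexivity.
  by have := IH b h; rewrite in_cons.
Qed.

Lemma gD_ones nz n : psem (gD nz) (Some (Some true)) (nseq n One) (Some (Some true)) [::].
Proof.
elim: n => [|n IH] /=; first constructor.
by apply: ps_skip IH.
Qed.

Definition bits nz n (L : seq {set 'I_n}) := [seq enc_bit (nz && (A == setT)) | A <- L].

Lemma gD_blocks nz n (L : seq {set 'I_n}) :
  psem (gD nz) (Some (Some true)) (rev (blocks L)) (Some (Some true)) (rev (bits nz L)).
Proof.
elim: L => [|A L IH]; first constructor.
rewrite blocks_cons -cat1s catA rev_cat /= rev_cons -cats1.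
rewrite [X in psem _ _ _ _ X]rev_cons -cats1.
apply: psem_cat IH _.
rewrite -[[:: enc_bit (nz && (A == setT))]]/([::] ++ [:: enc_bit (nz && (A == setT))]); apply: psem_cat.
  by apply: gD_01; rewrite all_rev enc_set01.
rewrite mem_rev enc_set_zero negbK.
by apply: ps_emit; [reflexivity | constructor].
Qed.

Lemma gD_all nz n (L : seq {set 'I_n}) :
  psem (gD nz) None (rev (enc_inst L)) (Some (Some true)) (Dollar :: rev (bits nz L)).
Proof.
rewrite rev_instE.
apply: ps_nc; first reflexivity.
apply: ps_skip; first reflexivity.
rewrite -[rev (bits _ _)]cats0; apply: psem_cat; first exact: gD_blocks.
exact: gD_ones.
Qed.

Definition stepd (f : Sym -> Sym) (mv : Move) : Delta bool :=
  fun q s => if q then None else Some (true, f s, mv).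
Definition homed : Delta bool :=
  fun q s => if q then None else if is_blank s then Some (true, Blank, MRight) else Some (false, s, MLeft).

Lemma home_lem U l R : all nonblank U -> allb l ->
  nsteps homed (size U + 1) (false, behead (U ++ l), head Blank (U ++ l) :: R) =
  Some (true, Blank :: behead l, rev U ++ R).
Proof.
move=> hU hl; apply: nsteps_add; first by apply: sweep_left => // s /negbTE /= ->.
by rewrite head_allb //= /step /=.
Qed.

Lemma lift_nsteps S S' (d : Delta S) (d' : Delta S') h n q l r q' l' r' :
  simP d d' h -> nsteps d n (q, l, r) = Some (q', l', r') -> leadsto d' (h q, l, r) n (h q', l', r').
Proof. by move=> H /(nsteps_sim H) /nsteps_leadsto. Qed.

Lemma lift_trans S S' (d : Delta S) (d' : Delta S') h q1 q2 l r :
  simF d d' h -> step d (q1, l, r) = step d (q2, l, r) -> leadsto d' (h q1, l, r) 0 (h q2, l, r).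
Proof. by move=> H E; apply: (trans_lift (c1 := (q1, l, r)) (c2 := (q2, l, r)) H E). Qed.

Definition SL := stepd id MLeft.
Definition SR := stepd id MRight.
Definition SE := stepd (fun _ => Blank) MLeft.
Definition Ph0 := pdelta true g0.
Definition PA := pdelta false gA.
Definition PB := pdelta true gB.
Definition PC := pdelta false gC.
Definition PD nz := pdelta false (gD nz).

Section Top.
Variable M : TM.
Definition R6 := seqk homed (@tm_delta M) (fun _ => tm_start M).
Definition R5 := seqk PC R6 (fun _ => inl false).
Definition R4 := seqk SL R5 (fun _ => inl (Rd tt)).
Definition R3 := seqk PB R4 (fun _ => inl false).
Definition R2 := seqk SR R3 (fun _ => inl (Rd None)).
Definition R1 := seqk PA R2 (fun _ => inl false).
Definition Red := seqk SL R1 (fun _ => inl (Rd None)).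
Definition D2 := seqk SE homed (fun _ => false).
Definition D1 nz := seqk (PD nz) D2 (fun _ => inl false).
Definition Dir nz := seqk SL (D1 nz) (fun _ => inl (Rd None)).
Definition Br := sumd (sumd (Dir false) (Dir true)) Red.
Definition DirS := (bool + (PS Mode4 + (bool + bool)))%type.
Definition RedS := (bool + (PS Mode4 + (bool + (PS Mode4 + (bool + (PS unit + (bool + 'I_(tm_k M).+1)))))))%type.
Definition BrS := ((DirS + DirS) + RedS)%type.
Definition k0 (q : PS Mode0) : BrS :=
  match q with
  | inl (inl (inr (nz, _, f))) => if nz && ~~ f then inr (inl false)
                                  else inl (if nz then inr (inl false) else inl (inl false))
  | _ => inl (inl (inl false))
  end.
Definition Top := seqk Ph0 Br k0.
Definition TopTM := mkTM (inl (Rd (inl false)) : PS Mode0 + _) Top.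
End Top.

Lemma nonstop_nb s : all nonstop s -> all nonblank s.
Proof. by apply: sub_all => -[]. Qed.

Lemma liftN S S' S'' (d : Delta S) (d2 : Delta S') (k : S -> S') (D : Delta S'') (h : (S + S') -> S'')
  n q l r q' l' r' : simF (seqk d d2 k) D h -> nsteps d n (q, l, r) = Some (q', l', r') ->
  leadsto D (h (inl q), l, r) n (h (inl q'), l', r').
Proof.
move=> H hs; have := lift_nsteps (simP_comp (@seqk_l _ _ d d2 k) (simFP H)) hs; exact.
Qed.

Lemma liftT S S' S'' (d : Delta S) (d2 : Delta S') (k : S -> S') (D : Delta S'') (h : (S + S') -> S'')
  q l r : simF (seqk d d2 k) D h -> d q (head Blank r) = None ->
  leadsto D (h (inl q), l, r) 0 (h (inr (k q)), l, r).
Proof. by move=> H E; apply: (lift_trans H); apply: seqk_trans. Qed.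

Lemma size_inst n (L : seq {set 'I_n}) : size (enc_inst L) = n + 1 + size L * (n + 1).
Proof.
rewrite /enc_inst size_cat size_nseq /=.
have -> : size (flatten [seq enc_set A ++ [:: Hash] | A <- L]) = size L * (n + 1).
  elim: L => [|A L IH] //=.
  by rewrite size_cat IH size_cat /enc_set size_map size_enum_ord /= mulSn addn1.
lia.
Qed.

Lemma bnd_mul k a b x y : k <= a * b -> a <= x -> b <= y -> k <= x * y.
Proof. by move=> h ha hb; apply: leq_trans h (leq_mul ha hb). Qed.

Lemma bound_arith s m n k1 kA kB kC : 0 < s -> m <= s -> n <= s ->
  k1 <= s * (2 * s + 3) -> kA <= (s + m + 2) * (2 * (s + m + 2) + 3) ->
  kB <= (s + n + 2) * (2 * (m + 2 + s + n + 2) + 3) ->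
  kC <= (s + s) * (2 * (m + n + 4 + s + s) + 3) ->
  k1 + kA + kB + kC + (m + n + s + 5) + 3 <= 200 * (s * s).
Proof.
move=> hs hm hn h1 hA hB hC.
have e1 : k1 <= s * (5 * s) by apply: bnd_mul h1 _ _; lia.
have eA : kA <= (4 * s) * (11 * s) by apply: bnd_mul hA _ _; lia.
have eB : kB <= (4 * s) * (17 * s) by apply: bnd_mul hB _ _; lia.
have eC : kC <= (2 * s) * (19 * s) by apply: bnd_mul hC _ _; lia.
have ss : s <= s * s by apply: leq_pmulr.
rewrite mulnCA in e1. rewrite mulnCA mulnA in eA. rewrite mulnCA mulnA in eB. rewrite mulnCA mulnA in eC.
clear h1 hA hB hC.
set t := s * s in e1 eA eB eC ss *.
lia.
Qed.

Section Chain.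
Variable M : TM.
Notation Top := (@Top M).

Definition wred n (L : seq {set 'I_n}) :=
  enc_inst L ++ nseq n One ++ Hash :: Dollar :: nseq (size L) Zero ++ One :: Dollar :: enc_inst L.

Lemma FRed : simF (@Red M) Top (inr \o inr). Proof. apply: (@simF_comp _ _ _ _ (@Br M)); [exact: sumd_r | exact: seqk_r]. Qed.
Lemma F1 : simF (@R1 M) Top (inr \o inr \o inr). Proof. apply: (@simF_comp _ _ _ _ (@Red M)); [exact: seqk_r | exact: FRed]. Qed.
Lemma F2 : simF (@R2 M) Top (inr \o inr \o inr \o inr). Proof. apply: (@simF_comp _ _ _ _ (@R1 M)); [exact: seqk_r | exact: F1]. Qed.
Lemma F3 : simF (@R3 M) Top (inr \o inr \o inr \o inr \o inr). Proof. apply: (@simF_comp _ _ _ _ (@R2 M)); [exact: seqk_r | exact: F2]. Qed.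
Lemma F4 : simF (@R4 M) Top (inr \o inr \o inr \o inr \o inr \o inr). Proof. apply: (@simF_comp _ _ _ _ (@R3 M)); [exact: seqk_r | exact: F3]. Qed.
Lemma F5 : simF (@R5 M) Top (inr \o inr \o inr \o inr \o inr \o inr \o inr). Proof. apply: (@simF_comp _ _ _ _ (@R4 M)); [exact: seqk_r | exact: F4]. Qed.
Lemma F6 : simF (@R6 M) Top (inr \o inr \o inr \o inr \o inr \o inr \o inr \o inr). Proof. apply: (@simF_comp _ _ _ _ (@R5 M)); [exact: seqk_r | exact: F5]. Qed.
Lemma FM : simF (@tm_delta M) Top (inr \o inr \o inr \o inr \o inr \o inr \o inr \o inr \o inr).
Proof. apply: (@simF_comp _ _ _ _ (@R6 M)); [exact: seqk_r | exact: F6]. Qed.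

Lemma red_chain n (L : seq {set 'I_n}) : 0 < n -> setT \notin L ->
  exists N, N <= 200 * (size (enc_inst L)) ^ 2 /\
   forall t, run Top (N + t) (inl (Rd (inl false)), [::], enc_inst L) =
             run (@tm_delta M) t (tm_start M, [::], wred L).
Proof.
move=> hn hT.
set X := enc_inst L.
have hX : all nonstop X := inst_nonstop L.
have hXb := nonstop_nb hX.
have hrX : all nonstop (rev X) by rewrite all_rev.
have hrXb : all nonblank (rev X) by rewrite all_rev.
have [k1 [l1 [hl1 hk1 hs1]]] := pass_lr (Lft := [::]) (l := [::]) g0_nb [::] erefl (g0_all L) isT isT hX.
rewrite !cats0 /= in hs1.
have L1 : leadsto Top (inl (Rd (inl false)), [::], X) k1 (inl (Rd (inr (0 < n, true, setT \in L))), rev X ++ l1, [::]).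
  exact: (lift_nsteps (@seqk_l _ _ Ph0 (@Br M) (@k0 M)) hs1).
have L2 : leadsto Top (inl (Rd (inr (0 < n, true, setT \in L))), rev X ++ l1, [::]) 0
                      (inr (inr (inl false)), rev X ++ l1, [::]).
  by apply: stepeq_leadsto => //; rewrite seqk_trans //= hn (negbTE hT).
have L3 := liftN (n := 1) (q' := true) FRed (erefl : nsteps SL 1 (false, rev X ++ l1, [::]) = _).
have L4 := @liftT _ _ _ _ _ _ _ _ true (behead (rev X ++ l1)) [:: head Blank (rev X ++ l1); Blank] FRed erefl.
have [kA [l2 [hl2 hkA hsA]]] := pass_rl (Lft := [::]) (l := l1) gA_nb [:: Blank] erefl (gA_all L) isT hl1 hrX.
rewrite /= revK in hsA.
have L5 := liftN F1 hsA.
have L6 := @liftT _ _ _ _ _ _ _ _ (Rd (Some (Some true)) : PS Mode4) (One :: nseq (size L) Zero ++ l2) (Dollar :: X ++ [:: Blank]) F1 erefl.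
have L7 := liftN (n := 1) (q' := true) F2 (erefl : nsteps SR 1 (false, One :: nseq (size L) Zero ++ l2, Dollar :: X ++ [:: Blank]) = _).
set Lft := Dollar :: One :: nseq (size L) Zero.
have hLft : all nonblank Lft by rewrite /Lft /= all_nseq orbT.
have L8 := @liftT _ _ _ _ _ _ _ _ true (Lft ++ l2) (X ++ [:: Blank]) F2 erefl.
have [kB [l3 [hl3 hkB hsB]]] := pass_lr (Lft := Lft) (l := l2) gB_nb [:: Blank] erefl (gB_all L) hLft hl2 hX.
set E := [:: Dollar; Hash] ++ nseq n One in hsB hkB *.
have eE : E = [:: Dollar; Hash] ++ nseq n One by [].
have hE : all nonblank E by rewrite eE /= all_nseq orbT.
clearbody E.
have L9 := liftN F3 hsB.
have L10 := @liftT _ _ _ _ _ _ _ _ (Rd (Some (Some true)) : PS Mode4) (rev X ++ Lft ++ E ++ l3) [:: Blank] F3 erefl.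
have L11 := liftN (n := 1) (q' := true) F4 (erefl : nsteps SL 1 (false, rev X ++ Lft ++ E ++ l3, [:: Blank]) = _).
have L12 := @liftT _ _ _ _ _ _ _ _ true (behead (rev X ++ Lft ++ E ++ l3)) [:: head Blank (rev X ++ Lft ++ E ++ l3); Blank] F4 erefl.
have hLE : all nonblank (Lft ++ E) by rewrite all_cat hLft hE.
have [kC [l4 [hl4 hkC hsC]]] := pass_rl (Lft := Lft ++ E) (l := l3) gC_nb [:: Blank] erefl (gC_all hrXb) hLE hl3 hrX.
rewrite revK -[(Lft ++ E) ++ l3]catA -[(Lft ++ E) ++ rev X ++ l4]catA in hsC.
have L13 := liftN F5 hsC.
have L14 := @liftT _ _ _ _ _ _ _ _ (Rd tt : PS unit) (behead (Lft ++ E ++ rev X ++ l4)) (head Blank (Lft ++ E ++ rev X ++ l4) :: X ++ [:: Blank]) F5 erefl.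
set U := Lft ++ E ++ rev X.
have hU : all nonblank U by rewrite /U catA all_cat hLE.
have hsH := home_lem (X ++ [:: Blank]) hU hl4.
rewrite /U -[(Lft ++ E ++ rev X) ++ l4]catA -[(E ++ rev X) ++ l4]catA in hsH.
have L15 := liftN F6 hsH.
have L16 := @liftT _ _ _ _ _ _ _ _ true (Blank :: behead l4) (rev U ++ X ++ [:: Blank]) F6 erefl.
exists (k1 + 0 + 1 + 0 + kA + 0 + 1 + 0 + kB + 0 + 1 + 0 + kC + 0 + (size U + 1) + 0); split.
  have hs := size_inst L.
  have hm : size L <= size X.
    by rewrite /X hs; apply: leq_trans (leq_addl _ _); apply: leq_pmulr; rewrite addn1.
  have hnn : n <= size X by rewrite /X hs -addnA leq_addr.
  have hsp : 0 < size X by rewrite /X hs addn1.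
  move: hk1 hkA hkB hkC; rewrite -/X; clearbody X.
  rewrite /U eE /Lft /= !size_cat /= !size_nseq !size_rev.
  rewrite !size_cat !size_nseq !size_rev.
  move: (size X) (size L) hm hnn hsp => s m hm hnn hsp h1 hA hB hC.
  clear -hm hnn hsp h1 hA hB hC.
  have h1' : k1 <= s * (2 * s + 3) by apply: (leq_trans h1); lia.
  have hA' : kA <= (s + m + 2) * (2 * (s + m + 2) + 3) by apply: (leq_trans hA); lia.
  have hB' : kB <= (s + n + 2) * (2 * (m + 2 + s + n + 2) + 3) by apply: (leq_trans hB); lia.
  have hC' : kC <= (s + s) * (2 * (m + n + 4 + s + s) + 3) by apply: (leq_trans hC); lia.
  have := bound_arith hsp hm hnn h1' hA' hB' hC'.
  rewrite mulnn. clear. lia.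
move=> t.
have LL := leadsto_trans (leadsto_trans (leadsto_trans (leadsto_trans (leadsto_trans (leadsto_trans (leadsto_trans (leadsto_trans
  (leadsto_trans (leadsto_trans (leadsto_trans (leadsto_trans (leadsto_trans (leadsto_trans (leadsto_trans
  L1 L2) L3) L4) L5) L6) L7) L8) L9) L10) L11) L12) L13) L14) L15) L16.
rewrite LL.
transitivity (run (@tm_delta M) t (tm_start M, Blank :: behead l4, rev U ++ X ++ [:: Blank])).
  exact: (run_sim FM t (tm_start M, Blank :: behead l4, rev U ++ X ++ [:: Blank])).
rewrite catA run_blanks //; last by rewrite /= behead_allb.
congr run; congr (_, _, _).
rewrite /wred -/X /U eE /Lft; clearbody X.
rewrite !rev_cat revK rev_nseq -!catA; congr (_ ++ _); congr (_ ++ _).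
by rewrite /= !rev_cons rev_nseq -!cats1 -!catA.
Qed.
End Chain.

Lemma outp_bits (b t : seq Sym) : all nonblank b -> take (find is_blank (b ++ Blank :: t)) (b ++ Blank :: t) = b.
Proof. by elim: b => [|x b IH] //= /andP [hx hb]; rewrite (negbTE hx) /= IH. Qed.

Lemma bits_nb nz n (L : seq {set 'I_n}) : all nonblank (bits nz L).
Proof. by rewrite /bits all_map; apply/allP => A _ /=; case: (nz && _). Qed.

Lemma bound_arith2 s m k1 kA : 0 < s -> m <= s ->
  k1 <= s * (2 * s + 3) -> kA <= (s + m + 1) * (2 * (s + m + 1) + 3) ->
  k1 + kA + m + 3 <= 200 * (s * s).
Proof.
move=> hs hm h1 hA.
have e1 : k1 <= s * (5 * s) by apply: bnd_mul h1 _ _; lia.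
have eA : kA <= (3 * s) * (9 * s) by apply: bnd_mul hA _ _; lia.
have ss : s <= s * s by apply: leq_pmulr.
rewrite mulnCA in e1. rewrite mulnCA mulnA in eA.
clear h1 hA.
set t := s * s in e1 eA ss *.
lia.
Qed.

Section Chain2.
Variable M : TM.
Notation Top := (@Top M).


Lemma FDir nz : simF (@Dir nz) Top (fun s => inr (inl (if nz then inr s else inl s))).
Proof.
case: nz.
- have H1 : simF (@Dir true) (@Br M) (inl \o inr).
    exact: (simF_comp (@sumd_r _ _ (@Dir false) (@Dir true)) (@sumd_l _ _ _ (@Red M))).
  exact: (simF_comp H1 (@seqk_r _ _ Ph0 (@Br M) (@k0 M))).
- have H1 : simF (@Dir false) (@Br M) (inl \o inl).
    exact: (simF_comp (@sumd_l _ _ (@Dir false) (@Dir true)) (@sumd_l _ _ _ (@Red M))).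
  exact: (simF_comp H1 (@seqk_r _ _ Ph0 (@Br M) (@k0 M))).
Qed.

Lemma FD1 nz : simF (D1 nz) Top (fun s => inr (inl (if nz then inr (inr s) else inl (inr s)))).
Proof. exact: (simF_comp (@seqk_r _ _ SL (D1 nz) (fun _ => inl (Rd None))) (FDir nz)). Qed.

Lemma FD2 nz : simF D2 Top (fun s => inr (inl (if nz then inr (inr (inr s)) else inl (inr (inr s))))).
Proof. exact: (simF_comp (@seqk_r _ _ (PD nz) D2 (fun _ => inl false)) (FD1 nz)). Qed.

Lemma FH nz : simF homed Top (fun s => inr (inl (if nz then inr (inr (inr (inr s))) else inl (inr (inr (inr s)))))).
Proof. exact: (simF_comp (@seqk_r _ _ SE homed (fun _ => false)) (FD2 nz)). Qed.

Lemma dir_chain n (L : seq {set 'I_n}) : ~~ ((0 < n) && (setT \notin L)) ->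
  exists N, N <= 200 * (size (enc_inst L)) ^ 2 /\
   forall t, run Top (N + t) (inl (Rd (inl false)), [::], enc_inst L) = Some (bits (0 < n) L).
Proof.
move=> hb.
set nz := 0 < n.
set X := enc_inst L.
have hX : all nonstop X := inst_nonstop L.
have hXb := nonstop_nb hX.
have hrX : all nonstop (rev X) by rewrite all_rev.
have [k1 [l1 [hl1 hk1 hs1]]] := pass_lr (Lft := [::]) (l := [::]) g0_nb [::] erefl (g0_all L) isT isT hX.
rewrite !cats0 /= in hs1.
have L1 : leadsto Top (inl (Rd (inl false)), [::], X) k1 (inl (Rd (inr (0 < n, true, setT \in L))), rev X ++ l1, [::]).
  exact: (lift_nsteps (@seqk_l _ _ Ph0 (@Br M) (@k0 M)) hs1).
have L2 : leadsto Top (inl (Rd (inr (0 < n, true, setT \in L))), rev X ++ l1, [::]) 0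
                      (inr (inl (if nz then inr (inl false) else inl (inl false))), rev X ++ l1, [::]).
  apply: stepeq_leadsto => //; rewrite seqk_trans //=.
  by rewrite -/nz (negbTE hb).
have L3 := liftN (n := 1) (q' := true) (FDir nz) (erefl : nsteps SL 1 (false, rev X ++ l1, [::]) = _).
have L4 := @liftT _ _ _ _ _ _ _ _ true (behead (rev X ++ l1)) [:: head Blank (rev X ++ l1); Blank] (FDir nz) erefl.
have [kA [l2 [hl2 hkA hsA]]] := pass_rl (Lft := [::]) (l := l1) (@gD_nb nz) [:: Blank] erefl (gD_all nz L) isT hl1 hrX.
rewrite /= revK in hsA.
have L5 := liftN (FD1 nz) hsA.
have L6 := @liftT _ _ _ _ _ _ _ _ (Rd (Some (Some true)) : PS Mode4) (rev (bits nz L) ++ l2) (Dollar :: X ++ [:: Blank]) (FD1 nz) erefl.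
have L7 := liftN (n := 1) (q' := true) (FD2 nz) (erefl : nsteps SE 1 (false, rev (bits nz L) ++ l2, Dollar :: X ++ [:: Blank]) = _).
have L8 := @liftT _ _ _ _ _ _ _ _ true (behead (rev (bits nz L) ++ l2)) (head Blank (rev (bits nz L) ++ l2) :: Blank :: X ++ [:: Blank]) (FD2 nz) erefl.
have hU : all nonblank (rev (bits nz L)) by rewrite all_rev bits_nb.
have hsH := home_lem (Blank :: X ++ [:: Blank]) hU hl2.
rewrite revK in hsH.
have L9 := lift_nsteps (simFP (FH nz)) hsH.
exists (k1 + 0 + 1 + 0 + kA + 0 + 1 + 0 + (size (rev (bits nz L)) + 1)); split.
  have hs := size_inst L.
  have hm : size L <= size X.
    by rewrite /X hs; apply: leq_trans (leq_addl _ _); apply: leq_pmulr; rewrite addn1.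
  have hsp : 0 < size X by rewrite /X hs addn1.
  move: hk1 hkA; rewrite -/X; clearbody X.
  rewrite /= !size_rev ?size_map ?size_cat ?size_rev ?size_map.
  move: (size X) (size L) hm hsp => s m hm hsp h1 hA.
  clear -hm hsp h1 hA.
  have h1' : k1 <= s * (2 * s + 3) by apply: (leq_trans h1); lia.
  have hA' : kA <= (s + m + 1) * (2 * (s + m + 1) + 3) by apply: (leq_trans hA); lia.
  have := bound_arith2 hsp hm h1' hA'.
  rewrite mulnn. clear. lia.
move=> t.
have LL := leadsto_trans (leadsto_trans (leadsto_trans (leadsto_trans (leadsto_trans (leadsto_trans (leadsto_trans
  (leadsto_trans L1 L2) L3) L4) L5) L6) L7) L8) L9.
rewrite LL run_halt.
  by rewrite /= outp_bits ?bits_nb.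
exact: (step_simF (FH nz) (true, Blank :: behead l2, bits nz L ++ Blank :: X ++ [:: Blank])).
Qed.
End Chain2.

Lemma opt_ge1 n (L : seq {set 'I_n}) : 0 < n -> 0 < size L -> 1 <= sc_opt L.
Proof.
move=> hn hL; rewrite /sc_opt; apply: (big_ind (fun x => 1 <= x)) => //.
  by move=> x y hx hy; rewrite leq_min hx hy.
move=> J hc; rewrite lt0n; apply/negP => /eqP /cards0_eq hJ.
move: hc; rewrite /sc_covers hJ big_set0 => /eqP /setP /(_ (Ordinal hn)).
by rewrite in_set0 in_setT.
Qed.

Lemma map_const_nseq (T U : Type) (a : U) (s : seq T) : [seq a | _ <- s] = nseq (size s) a.
Proof. by elim: s => //= x s ->. Qed.

Lemma enc_solE m (J : {set 'I_m}) (F : nat -> bool) :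
  (forall i : 'I_m, (i \in J) = F i) -> enc_sol J = [seq enc_bit (F j) | j <- iota 0 m].
Proof.
move=> h; rewrite /enc_sol -val_enum_ord -map_comp.
by apply: eq_map => i /=; rewrite h.
Qed.

Lemma enc_set_T n : enc_set [set: 'I_n] = nseq n One.
Proof.
rewrite /enc_set (eq_map (g := fun=> One)); last by move=> i; rewrite in_setT.
by rewrite map_const_nseq size_enum_ord.
Qed.

Lemma rem_rcons (T : eqType) (x : T) (s : seq T) : x \notin s -> rem x (rcons s x) = s.
Proof.
elim: s => [|a s IH] /=; first by rewrite eqxx.
rewrite in_cons negb_or => /andP [ha hs].
by rewrite eq_sym (negbTE ha) IH.
Qed.

Section Red.
Variables (n : nat) (L : seq {set 'I_n}).
Definition L2 := rcons L setT.
Lemma size_L2 : size L < size L2. Proof. by rewrite /L2 size_rcons. Qed.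
Definition i0 : 'I_(size L2) := Ordinal size_L2.
Definition J0 : {set 'I_(size L2)} := [set i0].

Lemma enc_sol_J0 : enc_sol J0 = nseq (size L) Zero ++ [:: One].
Proof.
rewrite (@enc_solE _ _ (fun j => j == size L)); last by move=> i; rewrite in_set1.
rewrite /L2 size_rcons -addn1 iotaD map_cat /= add0n eqxx.
congr (_ ++ _).
have -> : [seq enc_bit (j == size L) | j <- iota 0 (size L)] = [seq Zero | _ <- iota 0 (size L)].
  by apply/eq_in_map => j; rewrite mem_iota add0n => /andP [_ hj]; rewrite (ltn_eqF hj).
by rewrite map_const_nseq size_iota.
Qed.

Lemma reoptE : enc_reopt L2 J0 L = wred L.
Proof.
rewrite /enc_reopt enc_sol_J0 /wred /enc_inst /L2 map_rcons flatten_rcons enc_set_T.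
by rewrite -!catA /= -!catA.
Qed.

Lemma L2_valid : sc_valid L -> [set: 'I_n] \notin L -> sc_valid L2.
Proof.
rewrite /sc_valid /L2 => /andP [hu _] hT.
rewrite rcons_uniq hT hu /= big_rcons /=.
by rewrite setUT.
Qed.

Lemma L2_covers : sc_covers L2 J0.
Proof. by rewrite /sc_covers /J0 big_set1 /= /L2 nth_rcons ltnn eqxx. Qed.
End Red.

Lemma direct_good (f : nat -> rat) n (L : seq {set 'I_n}) : (forall n, (1 <= f n)%R) ->
  sc_valid L -> ~~ ((0 < n) && (setT \notin L)) -> sc_good_output f L (bits (0 < n) L).
Proof.
move=> hf /andP [hu hcov] hb.
pose J := [set i : 'I_(size L) | (0 < n) && (nth set0 L i == setT)].
exists J; split.
- case: (posnP n) => hn.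
    subst n; by apply/eqP/setP => -[].
  have hT : setT \in L by move: hb; rewrite hn /= negbK.
  have hi : index setT L < size L by rewrite index_mem.
  rewrite /sc_covers eqEsubset subsetT /=.
  apply: subset_trans (bigcup_sup (Ordinal hi) _).
    by rewrite /= nth_index.
  by rewrite inE hn /= nth_index.
- rewrite (@enc_solE _ _ (fun j => (0 < n) && (nth set0 L j == setT))); last by move=> i; rewrite inE.
  rewrite /bits -[in LHS](mkseq_nth set0 L) /mkseq -map_comp.
  by apply: eq_map.
- case: (posnP n) => hn.
    have hn0 : (0 < n) = false by rewrite hn.
    have -> : J = set0 by apply/setP => i; rewrite !inE hn0.
    by rewrite cards0 mulr_ge0 // (le_trans _ (hf _)).
  have hT : setT \in L by move: hb; rewrite hn /= negbK.
  have hi : index setT L < size L by rewrite index_mem.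
  have hJ : #|J| <= 1.
    rewrite -(cards1 (Ordinal hi)); apply: subset_leq_card; apply/subsetP => i.
    rewrite !inE hn /= => /eqP hi'; apply/eqP/val_inj => /=.
    by rewrite -hi' index_uniq.
  have hL : 0 < size L by apply: leq_ltn_trans hi.
  apply: (le_trans (y := 1%R)); first by rewrite -[X in (_ <= X)%R]mulr1n ler_nat.
  rewrite -[1%R]mulr1; apply: ler_pM; [exact: ler01 | exact: ler01 | exact: hf |].
  by rewrite ler1n opt_ge1.
Qed.

Lemma expn_mono a b d : a <= b -> a ^ d <= b ^ d.
Proof. by case: d => [|d] h //; rewrite leq_exp2r. Qed.

Lemma final_arith s n m c d N : 0 < s -> n <= s -> m <= s -> N <= 200 * s ^ 2 ->
  N + (c * (s + n + m + 4 + s) ^ d + c) <= (200 + c * 8 ^ d) * s ^ d.+2 + (200 + c * 8 ^ d).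
Proof.
move=> hs hn hm hN.
have h1 : (s + n + m + 4 + s) ^ d <= 8 ^ d * s ^ d.
  rewrite -(expnMn 8 s d); apply: expn_mono; lia.
have h2 : s ^ d <= s ^ d.+2 by apply: leq_pexp2l => //; lia.
have h3 : s ^ 2 <= s ^ d.+2 by apply: leq_pexp2l => //; lia.
have h4 : 1 <= 8 ^ d by rewrite expn_gt0.
have e1 : c * (s + n + m + 4 + s) ^ d <= c * 8 ^ d * s ^ d.+2.
  by rewrite -mulnA leq_mul2l; apply/orP; right; apply: leq_trans h1 _; rewrite leq_mul2l h2 orbT.
have e2 : c <= c * 8 ^ d by rewrite leq_pmulr.
rewrite mulnDl.
move: e1 e2 hN h3; set A := c * (_ ^ d); set B := c * 8 ^ d; set S2 := s ^ 2; set S := s ^ d.+2.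
move=> e1 e2 hN h3.
have : 200 * S2 <= 200 * S by rewrite leq_mul2l h3.
move: (B * S) e1 => BS e1.
lia.
Qed.

Lemma size_wred n (L : seq {set 'I_n}) :
  size (wred L) = size (enc_inst L) + n + size L + 4 + size (enc_inst L).
Proof. rewrite /wred; move: (enc_inst L) => X; rewrite !size_cat /= !size_cat !size_nseq /=; lia. Qed.

Lemma lemma3p4_aux (R : realFieldType) (rho : R) (f : nat -> rat) :
  (1 <= rho)%R -> (forall n, (1 <= f n)%R) ->
  poly_approx_reopt_Sminus rho f -> poly_approx_SetCover f.
Proof.
move=> hrho hf [M [c [d HM]]].
exists (TopTM M), (200 + c * 8 ^ d), d.+2.
move=> n L hv /=.
rewrite /TopTM mkTM_run.
set X := enc_inst L.
have hs := size_inst L.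
have hm : size L <= size X.
  by rewrite /X hs; apply: leq_trans (leq_addl _ _); apply: leq_pmulr; rewrite addn1.
have hnn : n <= size X by rewrite /X hs -addnA leq_addr.
have hsp : 0 < size X by rewrite /X hs addn1.
case: (boolP ((0 < n) && (setT \notin L))) => hb.
- case/andP: hb => hn hT.
  have [N [hN HR]] := red_chain M hn hT.
  have hv2 := L2_valid hv hT.
  have hin : [set: 'I_n] \in L2 L by rewrite /L2 mem_rcons mem_head.
  have hperm : perm_eq L (rem [set: 'I_n] (L2 L)) by rewrite /L2 rem_rcons.
  have hJ : ((#|J0 L|)%:R <= rho * (sc_opt (L2 L))%:R)%R.
    rewrite /J0 cards1 mulr1n -[X in (X <= _)%R]mulr1; apply: ler_pM; [exact: ler01 | exact: ler01 | exact: hrho |].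
    rewrite ler1n; apply: opt_ge1 => //; by rewrite /L2 size_rcons.
  have [o [ho hgood]] := HM n (L2 L) L setT (J0 L) hv2 hin hperm hv (L2_covers L) hJ.
  exists o; split => //.
  move: ho; rewrite reoptE /tm_run tm_run_cfgE => ho.
  have hle := final_arith c d hsp hnn hm hN.
  rewrite -size_wred in hle.
  rewrite -(subnKC hle) -addnA HR.
  exact: run_mono ho.
- have [N [hN HD]] := dir_chain M hb.
  exists (bits (0 < n) L); split; last exact: direct_good.
  have hle : N <= (200 + c * 8 ^ d) * size X ^ d.+2 + (200 + c * 8 ^ d).
    apply: leq_trans hN _; apply: leq_trans (leq_addr _ _).
    rewrite mulnDl; apply: leq_trans (leq_addr _ _).
    by rewrite leq_mul2l leq_pexp2l.
  by rewrite -(subnKC hle) HD.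
Qed.

Unset Implicit Arguments.
Local Open Scope ring_scope.

Theorem lemma3p4 (R : realFieldType) (rho : R) (f : nat -> rat) :
  1 <= rho -> (forall n, 1 <= f n) ->
  poly_approx_reopt_Sminus rho f -> poly_approx_SetCover f.
Proof. exact: lemma3p4_aux. Qed.
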